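(* Let $a$ and $b$ be relatively prime integers with $1<a<b$, let $(u,v)$ be the definitely least solution of $ax+by=1$, and let $S=\langle a,b\rangle$. If $I_{i,a}(S)\neq\varnothing$ for some $i\in\{1,\dots,a-1\}$ and $h_i=\min I_{i,a}(S)$, then $I_{i,a}(S)=\{h_i,h_i+a,\dots,h_i+(|u|-1)a\}$.
   Context: $\langle a,b\rangle=\{\lambda_1a+\lambda_2b:\lambda_1,\lambda_2\in\mathbb{N}\}$. $I(S)$ is the set of isolated gaps of $S$ ($x\in\mathbb{N}\setminus S$ with $x-1,x+1\in S$), and $I_{i,a}(S)=\{s\in I(S):s\equiv i\pmod a\}$. The definitely least solution $(u,v)$ of $ax+by=1$ is the unique integer solution with $|u|,|v|$ minimal; equivalently the one with $|u|\le b/2$, $|v|\le a/2$. *)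

(* Defs.v *)
From mathcomp Require Import all_boot all_order all_algebra.
Set Implicit Arguments. Unset Strict Implicit. Unset Printing Implicit Defensive.

Definition in_sg2 (a b x : nat) : Prop := exists l1 l2 : nat, x = l1 * a + l2 * b.

(* Isolated gaps of <a,b>: x not in S with x-1 and x+1 in S (x >= 1 so x-1 is a genuine natural). *)
Definition isolated_gap (a b x : nat) : Prop :=
  0 < x /\ ~ in_sg2 a b x /\ in_sg2 a b x.-1 /\ in_sg2 a b x.+1.

Definition I_ia (a b i x : nat) : Prop := isolated_gap a b x /\ x = i %[mod a].

Definition def_least_sol (a b : nat) (u v : int) : Prop :=
  (a%:Z * u + b%:Z * v = 1)%R /\ (2 * `|u| <= b)%N /\ (2 * `|v| <= a)%N.

(* Main.v *)
Require Import Defs.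
From mathcomp Require Import all_boot all_order all_algebra.
From mathcomp Require Import zify.


Lemma mem_char (a b j x : nat) : 0 < a -> coprime a b -> j < a ->
  j * b = x %[mod a] -> (in_sg2 a b x <-> j * b <= x).
Proof.
move=> a0 cop ja hm; split.
- case=> l1 [l2 e].
  have hm2 : j * b = l2 * b %[mod a] by rewrite hm e modnMDl.
  case: (leqP j l2) => hjl.
    by rewrite e; apply: leq_trans (leq_addl _ _); rewrite leq_mul2r hjl orbT.
  have : a %| (j - l2) * b.
    by rewrite mulnBl -eqn_mod_dvd ?hm2 // leq_mul2r (ltnW hjl) orbT.
  rewrite Gauss_dvdl //.
  move/dvdn_leq; rewrite subn_gt0 hjl => /(_ isT); lia.
- move=> le.
  have : a %| x - j * b by rewrite -eqn_mod_dvd // hm.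
  move/divnK => e.
  exists ((x - j * b) %/ a), j; rewrite e; lia.
Qed.

Lemma cong_add (a p q r : nat) : p + q * a = r -> p = r %[mod a].
Proof. by move=> <-; rewrite addnC modnMDl. Qed.

Lemma cong_add2 (a p q r s : nat) : p + q * a = r + s * a -> p = r %[mod a].
Proof. by move=> e; rewrite -(modnMDl q p) addnC e addnC modnMDl. Qed.


Lemma char_gap (a b t m J x : nat) : 1 < a -> a < b -> coprime a b ->
  0 < t < a -> t * b = 1 + a * m -> J < a -> J * b = x %[mod a] ->
  (isolated_gap a b x <->
   [/\ a <= J + t, t <= J & exists2 k, 0 < k <= minn m (b - m) & x + k * a = J * b]).
Proof.
move=> a1 ab cop /andP[t0 ta] tb Ja hx.
have a0 : 0 < a by lia.
have mb : m < b.
  have : a * m < a * b.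
    have : t * b < a * b by rewrite ltn_mul2r ta andbT; lia.
    lia.
  by rewrite ltn_mul2l a0.
have mema := fun j y => @mem_char a b j y a0 cop.
have cx : forall j y z, j < a -> j * b + y * a = J * b + 1 + z * a -> (in_sg2 a b x.+1 <-> j * b <= x.+1).
  move=> j y z ja e; apply: mema => //.
  by rewrite (cong_add2 _ _ _ _ _ e) -modnDml hx modnDml addn1.
have cxm : forall j y z, 0 < x -> j < a -> j * b + 1 + y * a = J * b + z * a -> (in_sg2 a b x.-1 <-> j * b <= x.-1).
  move=> j y z x0 ja e; apply: mema => //.
  apply/eqP; rewrite -(eqn_modDr 1) !addn1 prednK //; apply/eqP.
  by rewrite -addn1 (cong_add2 _ _ _ _ _ e) hx.
have e1 : (J + t) * b = J * b + 1 + a * m.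
  by rewrite mulnDl tb addnA.
split.
- case=> x0 [nx [xm xp]].
  have xJ : x < J * b.
    by rewrite ltnNge; apply/negP => h; apply: nx; apply/(mema J x Ja hx).
  have Jt : a <= J + t.
    rewrite leqNgt; apply/negP => lt.
    have h0 : (J + t) * b + 0 * a = J * b + 1 + m * a by rewrite e1 (mulnC m); lia.
    move: (iffLR (cx _ _ _ lt h0) xp); rewrite mulnDl => h.
    have : b <= t * b by rewrite leq_pmull.
    lia.
  have tJ : t <= J.
    rewrite leqNgt; apply/negP => lt.
    have j2 : J + (a - t) < a by lia.
    have e3 : (J + (a - t)) * b + t * b = J * b + a * b.
      by rewrite -!mulnDl -addnA (subnK (ltnW ta)).
    have h0 : (J + (a - t)) * b + 1 + 0 * a = J * b + (b - m) * a.
      rewrite mulnBl; have : m * a <= b * a by rewrite leq_pmul2r // ltnW.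
      rewrite (mulnC m) (mulnC b); lia.
    move: (iffLR (cxm _ _ _ x0 j2 h0) xm); rewrite mulnDl => h.
    have : b <= (a - t) * b by rewrite leq_pmull; lia.
    lia.
  split => //.
  have dv : a %| J * b - x by rewrite -eqn_mod_dvd ?hx // ltnW.
  set k := (J * b - x) %/ a.
  have ek : x + k * a = J * b by rewrite divnK //; lia.
  exists k => //.
  have k0 : 0 < k by case: k ek => [|]; lia.
  rewrite k0 /= leq_min.
  have jp : J + t - a < a by lia.
  have e4 : (J + t - a) * b + a * b = J * b + 1 + a * m by rewrite -e1 -mulnDl subnK.
  have h0 : (J + t - a) * b + (b - m) * a = J * b + 1 + 0 * a.
    rewrite mulnBl; have : m * a <= b * a by rewrite leq_pmul2r // ltnW.
    rewrite (mulnC m) (mulnC b); lia.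
  have h1 := iffLR (cx _ _ _ jp h0) xp.
  have jm : J - t < a by lia.
  have e5 : (J - t) * b + t * b = J * b by rewrite -mulnDl subnK.
  have h0' : (J - t) * b + 1 + m * a = J * b + 0 * a by rewrite mulnC; lia.
  have h2 := iffLR (cxm _ _ _ x0 jm h0') xm.
  apply/andP; split.
    by rewrite -(leq_pmul2r a0); lia.
  by rewrite -(leq_pmul2r a0) mulnBl; lia.
- case=> Jt tJ [k /andP[k0 km] ek].
  move: km; rewrite leq_min => /andP[km kbm].
  have kma : k * a <= m * a by rewrite leq_pmul2r.
  have kbma : k * a <= (b - m) * a by rewrite leq_pmul2r.
  move: kbma; rewrite mulnBl => kbma.
  have mab : m * a <= b * a by rewrite leq_pmul2r // ltnW.
  have ka : a <= k * a by rewrite leq_pmull.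
  have e5 : (J - t) * b + t * b = J * b by rewrite -mulnDl subnK.
  have e4 : (J + t - a) * b + a * b = J * b + 1 + a * m by rewrite -e1 -mulnDl subnK.
  have x0 : 0 < x by rewrite (mulnC a m) in tb; lia.
  split => //; split; [|split].
  + by rewrite (mema J x Ja hx); lia.
  + have jm : J - t < a by lia.
    rewrite (cxm (J - t) m 0 x0 jm); rewrite (mulnC a m) in tb; lia.
  + have jp : J + t - a < a by lia.
    rewrite (cx (J + t - a) (b - m) 0 jp).
      rewrite (mulnC a m) (mulnC a b) in e4; lia.
    rewrite mulnBl (mulnC a m) (mulnC a b) in e4 *; lia.
Qed.


Lemma core (a b t m i h : nat) : 1 < a -> a < b -> coprime a b ->
  0 < t < a -> t * b = 1 + a * m ->
  I_ia a b i h -> (forall x, I_ia a b i x -> h <= x) ->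
  forall x, I_ia a b i x <-> exists2 k, k < minn m (b - m) & x = h + k * a.
Proof.
move=> a1 ab cop ht tb [hg hi] hmin.
have a0 : 0 < a by lia.
move: (ht) => /andP[t0 ta].
set n := minn m (b - m).
set J := (i * t) %% a.
have Ja : J < a by rewrite ltn_pmod.
have hJ : J * b = i %[mod a].
  by rewrite modnMml -mulnA tb mulnDr muln1 mulnCA (mulnC a (i * m)) addnC modnMDl.
have chx : forall x, x = i %[mod a] -> (isolated_gap a b x <->
   [/\ a <= J + t, t <= J & exists2 k, 0 < k <= n & x + k * a = J * b]).
  by move=> x hx; apply: char_gap => //; rewrite hJ hx.
clearbody J.
case: (iffLR (chx h hi) hg) => Jt tJ [kh /andP[kh0 khn] ekh].
have nm : n <= m by rewrite geq_minl.
have nam : n * a <= m * a by rewrite leq_pmul2r.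
clearbody n.
have Jbt : t * b <= J * b by rewrite leq_mul2r tJ orbT.
have [x0 ex0] : exists x0, x0 + n * a = J * b.
  exists (J * b - n * a); rewrite (mulnC a m) in tb; lia.
have x0i : x0 = i %[mod a] by rewrite (cong_add _ _ _ _ ex0) hJ.
have x0I : I_ia a b i x0.
  split => //; apply/(chx x0 x0i); split => //; exists n => //.
  by rewrite leqnn andbT; lia.
have := hmin _ x0I => hx0.
have khe : kh = n.
  apply/eqP; rewrite eqn_leq khn /= -(leq_pmul2r a0); lia.
move=> x; split.
- case=> xg xi.
  case: (iffLR (chx x xi) xg) => _ _ [k /andP[k0 kn] ek].
  exists (n - k); first by lia.
  have : k * a <= n * a by rewrite leq_pmul2r.
  rewrite mulnBl; subst kh; lia.
- case=> k kn ->.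
  have ek : h + k * a + (n - k) * a = J * b.
    rewrite -addnA -mulnDl subnKC ?(ltnW kn) //; subst kh; lia.
  have xi : h + k * a = i %[mod a] by rewrite (cong_add _ _ _ _ ek) hJ.
  split => //; apply/(chx _ xi); split => //; exists (n - k) => //; lia.
Qed.


Lemma tm_of_uv (a b : nat) (u v : int) : 1 < a -> a < b ->
  def_least_sol a b u v ->
  exists t m, [/\ 0 < t < a, t * b = 1 + a * m & minn m (b - m) = `|u|%N].
Proof.
move=> a1 ab [e [hu hv]].
case: v e hv => w; case: u hu => p /= hu e hv.
- exfalso.
  have : (a * p + b * w = 1)%N by lia.
  by case: p {hu e} => [|p]; case: w {hv} => [|w]; rewrite ?muln0 ?mulnS; lia.
- have E : (w * b = 1 + a * p.+1)%N by lia.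
  have w0 : 0 < w by case: w {e hv} E; rewrite ?mul0n; lia.
  exists w, p.+1; split; lia.
- have E : (a * p = 1 + b * w.+1)%N by lia.
  exists (a - w.+1), (b - p); split; try lia.
- exfalso.
  have : (a * p.+1 + b * w.+1 = 1 + 1)%R by lia.
  move=> h; have : (a * p.+1 + b * w.+1 = 2)%N by lia.
  rewrite !mulnS; lia.
Qed.

Theorem proposition4p7 (a b : nat) (u v : int) (i h : nat) :
  1 < a -> a < b -> coprime a b ->
  def_least_sol a b u v ->
  1 <= i <= a - 1 ->
  I_ia a b i h -> (forall x, I_ia a b i x -> h <= x) ->
  forall x, I_ia a b i x <-> exists2 k, k < `|u|%N & x = h + k * a.
Proof.
move=> a1 ab cop hd _ hh hmin.
have [t [m [ht tb me]]] := @tm_of_uv a b u v a1 ab hd.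
rewrite -me; exact: (@core a b t m i h a1 ab cop ht tb hh hmin).
Qed.
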